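(* Let $A$ be an approximately semi-contractible Banach algebra and $\Theta:A\to B$ a continuous surjective homomorphism onto a Banach algebra $B$. Then $B$ is approximately semi-contractible. If $A$ is boundedly approximately semi-contractible then so is $B$; if, further, $\Theta$ is the quotient map $A\to A/I$ determined by a closed two-sided ideal $I$ of $A$, then $K_{BASC}(B)\le K_{BASC}(A)$. Likewise, if $A$ is boundedly approximately semi-amenable then so is $B$.
   Context: For a Banach algebra $C$ and Banach $C$-bimodule $Y$, a derivation is a linear $D:C\to Y$ with $D(ab)=a\cdot D(b)+D(a)\cdot b$; for $\xi,\eta\in Y$ put $\mathrm{ad}_{\xi,\eta}(a)=a\cdot\xi-\eta\cdot a$. A continuous derivation $D:C\to Y$ is approximately semi-inner if there are nets $(\xi_i),(\eta_i)$ in $Y$ with $D(a)=\lim_i\mathrm{ad}_{\xi_i,\eta_i}(a)$ in norm for all $a\in C$, and boundedly approximately semi-inner if moreover $\sup_i\|\mathrm{ad}_{\xi_i,\eta_i}\|<\infty$ (operator norm). $C$ is approximately semi-contractible (resp. boundedly approximately semi-contractible) if for every Banach $C$-bimodule $Y$ every continuous derivation $C\to Y$ is approximately semi-inner (resp. boundedly approximately semi-inner); $C$ is boundedly approximately semi-amenable if for every Banach $C$-bimodule $X$ every continuous derivation $C\to X^*$ is boundedly approximately semi-inner, where $X^*$ has the dual module structure $\langle a\cdot f,x\rangle=\langle f,x\cdot a\rangle$, $\langle f\cdot a,x\rangle=\langle f,a\cdot x\rangle$. With $C^{\#}$ the unitization (identity $e$), $C^{\#}\widehat{\otimes}C^{\#}$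 the projective tensor product and $\pi$ the product map, $K_{BASC}(C)$ is the infimum of all $K>0$ for which there are nets $(\xi_i),(\eta_i)$ in $C^{\#}\widehat{\otimes}C^{\#}$ with $a\cdot\xi_i-\eta_i\cdot a\to 0$ for all $a\in C$, $\|\mathrm{ad}_{\xi_i,\eta_i}\|\le K$ and $\pi(\xi_i)=\pi(\eta_i)=e$ for all $i$ ($+\infty$ if none). *)

(* Defs.v *)
From mathcomp Require Import all_boot all_algebra.
From mathcomp Require Import complex.
From mathcomp Require Import all_classical all_reals all_analysis.
Import numFieldNormedType.Exports.
Import GRing.Theory Num.Theory.

Set Implicit Arguments.
Unset Strict Implicit.
Unset Printing Implicit Defensive.

Local Open Scope ring_scope.

Section BanachAlgebraDefs.
Variable R : realType.
Local Notation C := (R[i]).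

Record banach_algebra (A : completeNormedModType C) (mul : A -> A -> A) : Prop := {
  ba_mulDl : forall a b c, mul (a + b) c = mul a c + mul b c;
  ba_mulDr : forall a b c, mul a (b + c) = mul a b + mul a c;
  ba_mulZl : forall (k : C) a b, mul (k *: a) b = k *: mul a b;
  ba_mulZr : forall (k : C) a b, mul a (k *: b) = k *: mul a b;
  ba_mulA : forall a b c, mul a (mul b c) = mul (mul a b) c;
  ba_normM : forall a b, `|mul a b| <= `|a| * `|b| }.

Definition lin (U V : normedModType C) (f : U -> V) : Prop :=
  (forall u v, f (u + v) = f u + f v) /\ (forall (k : C) u, f (k *: u) = k *: f u).

Definition alg_hom (A B : normedModType C) (mulA : A -> A -> A) (mulB : B -> B -> B)
  (f : A -> B) : Prop :=
  lin f /\ forall a b, f (mulA a b) = mulB (f a) (f b).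

Record bimodule (A : normedModType C) (mul : A -> A -> A) (Y : completeNormedModType C)
    (l : A -> Y -> Y) (r : Y -> A -> Y) : Prop := {
  bm_lDl : forall a b y, l (a + b) y = l a y + l b y;
  bm_lZl : forall (k : C) a y, l (k *: a) y = k *: l a y;
  bm_lDr : forall a y z, l a (y + z) = l a y + l a z;
  bm_lZr : forall (k : C) a y, l a (k *: y) = k *: l a y;
  bm_rDl : forall y z a, r (y + z) a = r y a + r z a;
  bm_rZl : forall (k : C) y a, r (k *: y) a = k *: r y a;
  bm_rDr : forall y a b, r y (a + b) = r y a + r y b;
  bm_rZr : forall (k : C) y a, r y (k *: a) = k *: r y a;
  bm_lA : forall a b y, l (mul a b) y = l a (l b y);
  bm_rA : forall y a b, r y (mul a b) = r (r y a) b;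
  bm_lr : forall a y b, l a (r y b) = r (l a y) b;
  bm_lbounded : exists M : C, forall a y, `|l a y| <= M * `|a| * `|y|;
  bm_rbounded : exists M : C, forall a y, `|r y a| <= M * `|a| * `|y| }.

Definition derivation (A : normedModType C) (mul : A -> A -> A) (Y : normedModType C)
    (l : A -> Y -> Y) (r : Y -> A -> Y) (D : A -> Y) : Prop :=
  lin D /\ forall a b, D (mul a b) = l a (D b) + r (D a) b.

Definition ad (A : normedModType C) (Y : normedModType C)
    (l : A -> Y -> Y) (r : Y -> A -> Y) (xi eta : Y) (a : A) : Y :=
  l a xi - r eta a.

Definition directed (I : Type) (le : I -> I -> Prop) : Prop :=
  [/\ (forall i, le i i), (forall i j k, le i j -> le j k -> le i k),
      inhabited I & (forall i j, exists k, le i k /\ le j k)].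

Definition net_to (I : Type) (le : I -> I -> Prop) (Y : normedModType C)
    (x : I -> Y) (y : Y) : Prop :=
  forall eps : C, 0 < eps -> exists i0, forall i, le i0 i -> `|x i - y| < eps.

Definition approx_semi_inner (A : normedModType C) (Y : normedModType C)
    (l : A -> Y -> Y) (r : Y -> A -> Y) (D : A -> Y) : Prop :=
  exists (I : Type) (le : I -> I -> Prop), directed le /\
  exists xi eta : I -> Y,
    forall a, net_to le (fun i => ad l r (xi i) (eta i) a) (D a).

Definition bdd_approx_semi_inner (A : normedModType C) (Y : normedModType C)
    (l : A -> Y -> Y) (r : Y -> A -> Y) (D : A -> Y) : Prop :=
  exists (I : Type) (le : I -> I -> Prop), directed le /\
  exists xi eta : I -> Y,
    (forall a, net_to le (fun i => ad l r (xi i) (eta i) a) (D a)) /\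
    exists M : C, forall i a, `|ad l r (xi i) (eta i) a| <= M * `|a|.

Definition approx_semi_contractible (A : completeNormedModType C) (mul : A -> A -> A) : Prop :=
  forall (Y : completeNormedModType C) (l : A -> Y -> Y) (r : Y -> A -> Y),
    bimodule mul l r ->
    forall D : A -> Y, derivation mul l r D -> continuous D -> approx_semi_inner l r D.

Definition bdd_approx_semi_contractible (A : completeNormedModType C) (mul : A -> A -> A) : Prop :=
  forall (Y : completeNormedModType C) (l : A -> Y -> Y) (r : Y -> A -> Y),
    bimodule mul l r ->
    forall D : A -> Y, derivation mul l r D -> continuous D -> bdd_approx_semi_inner l r D.

(* Dual bimodules X^*: elements are bounded linear functionals on X,   *)
(* A map into X^* is written A -> X -> C; all the notions above are    *)
(* unfolded for X^*.                                                   *)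
Definition dual_elt (X : normedModType C) (f : X -> C) : Prop :=
  (forall u v, f (u + v) = f u + f v) /\ (forall (k : C) u, f (k *: u) = k * f u) /\
  exists M : C, forall x, `|f x| <= M * `|x|.

Definition dual_l (A X : normedModType C) (r : X -> A -> X) (a : A) (f : X -> C) : X -> C :=
  fun x => f (r x a).
Definition dual_r (A X : normedModType C) (l : A -> X -> X) (f : X -> C) (a : A) : X -> C :=
  fun x => f (l a x).

Definition dual_cont_derivation (A : normedModType C) (mul : A -> A -> A) (X : normedModType C)
    (l : A -> X -> X) (r : X -> A -> X) (D : A -> X -> C) : Prop :=
  [/\ (forall a, dual_elt (D a)),
      (forall a b, D (a + b) = (fun x => D a x + D b x)),
      (forall (k : C) a, D (k *: a) = (fun x => k * D a x)),
      (forall a b, D (mul a b) = (fun x => dual_l r a (D b) x + dual_r l (D a) b x)) &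
      (* continuity into X^* with the dual norm (= boundedness) *)
      exists M : C, forall a x, `|D a x| <= M * `|a| * `|x| ].

Definition dual_ad (A X : normedModType C) (l : A -> X -> X) (r : X -> A -> X)
    (xi eta : X -> C) (a : A) : X -> C :=
  fun x => dual_l r a xi x - dual_r l eta a x.

Definition dual_bdd_approx_semi_inner (A X : normedModType C)
    (l : A -> X -> X) (r : X -> A -> X) (D : A -> X -> C) : Prop :=
  exists (I : Type) (le : I -> I -> Prop), directed le /\
  exists xi eta : I -> X -> C,
    (forall i, dual_elt (xi i) /\ dual_elt (eta i)) /\
    (* norm convergence in X^* : ||D a - ad_i a||_{X^*} -> 0 *)
    (forall a (eps : C), 0 < eps -> exists i0, forall i, le i0 i ->
        forall x, `|D a x - dual_ad l r (xi i) (eta i) a x| <= eps * `|x|) /\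
    exists M : C, forall i a x, `|dual_ad l r (xi i) (eta i) a x| <= M * `|a| * `|x|.

Definition bdd_approx_semi_amenable (A : completeNormedModType C) (mul : A -> A -> A) : Prop :=
  forall (X : completeNormedModType C) (l : A -> X -> X) (r : X -> A -> X),
    bimodule mul l r ->
    forall D : A -> X -> C, dual_cont_derivation mul l r D -> dual_bdd_approx_semi_inner l r D.

(* Unitization A^# = C x A, product (l,a)(m,b) = (lm, l b + m a + ab), *)
(* norm ||(l,a)|| = |l| + ||a||, identity e = (1,0).                   *)
Definition unitz (A : normedModType C) := (C * A)%type.

Definition uadd (A : normedModType C) (p q : unitz A) : unitz A := (p.1 + q.1, p.2 + q.2).
Definition uopp (A : normedModType C) (p : unitz A) : unitz A := (- p.1, - p.2).
Definition uscale (A : normedModType C) (k : C) (p : unitz A) : unitz A := (k * p.1, k *: p.2).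
Definition uzero (A : normedModType C) : unitz A := (0, 0).
Definition uunit (A : normedModType C) : unitz A := (1, 0).
Definition uinj (A : normedModType C) (a : A) : unitz A := (0, a).
Definition umul (A : normedModType C) (mul : A -> A -> A) (p q : unitz A) : unitz A :=
  (p.1 * q.1, p.1 *: q.2 + q.1 *: p.2 + mul p.2 q.2).
Definition unorm (A : normedModType C) (p : unitz A) : C := `|p.1| + `|p.2|.

(* Algebraic tensors: finite lists of pairs, sum_k x_k (x) y_k.         *)
Definition tens (A : normedModType C) := seq (unitz A * unitz A).

Definition bilinear_form (A : normedModType C) (beta : unitz A -> unitz A -> C) : Prop :=
  [/\ (forall p q s, beta (uadd p q) s = beta p s + beta q s),
      (forall k p s, beta (uscale k p) s = k * beta p s),
      (forall p q s, beta s (uadd p q) = beta s p + beta s q) &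
      (forall k p s, beta s (uscale k p) = k * beta s p)].

Definition teval (A : normedModType C) (beta : unitz A -> unitz A -> C) (t : tens A) : C :=
  \sum_(x <- t) beta x.1 x.2.

(* equality in the algebraic tensor product A^# (x) A^# *)
Definition tequiv (A : normedModType C) (t s : tens A) : Prop :=
  forall beta, bilinear_form beta -> teval beta t = teval beta s.

Definition tcost (A : normedModType C) (t : tens A) : C :=
  \sum_(x <- t) unorm x.1 * unorm x.2.

(* ||t||_pi <= c, where ||t||_pi = inf over representations of sum ||x_k|| ||y_k|| *)
Definition pnorm_le (A : normedModType C) (t : tens A) (c : C) : Prop :=
  forall eps : C, 0 < eps -> exists s, tequiv t s /\ tcost s < c + eps.

Definition tsub (A : normedModType C) (t s : tens A) : tens A :=
  t ++ map (fun x => (uopp x.1, x.2)) s.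
Definition tleft (A : normedModType C) (mul : A -> A -> A) (a : A) (t : tens A) : tens A :=
  map (fun x => (umul mul (uinj a) x.1, x.2)) t.
Definition tright (A : normedModType C) (mul : A -> A -> A) (t : tens A) (a : A) : tens A :=
  map (fun x => (x.1, umul mul x.2 (uinj a))) t.
Definition tpi (A : normedModType C) (mul : A -> A -> A) (t : tens A) : unitz A :=
  foldr (fun x acc => uadd (umul mul x.1 x.2) acc) (uzero A) t.

(* Completion: elements of A^# (x)^ A^# are represented by Cauchy       *)
(* sequences of algebraic tensors for the projective norm.             *)
Definition ptens (A : normedModType C) := nat -> tens A.

Definition ptens_cauchy (A : normedModType C) (u : ptens A) : Prop :=
  forall eps : C, 0 < eps -> exists N, forall m n, (N <= m)%N -> (N <= n)%N ->
    pnorm_le (tsub (u m) (u n)) eps.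

(* ||u|| <= c in the completion (||u|| = lim_m ||u m||_pi) *)
Definition ptnorm_le (A : normedModType C) (u : ptens A) (c : C) : Prop :=
  forall eps : C, 0 < eps -> exists N, forall m, (N <= m)%N -> pnorm_le (u m) (c + eps).

(* pi(u) = p, where pi is the continuous extension of the product map *)
Definition ptpi_eq (A : normedModType C) (mul : A -> A -> A) (u : ptens A) (p : unitz A) : Prop :=
  forall eps : C, 0 < eps -> exists N, forall m, (N <= m)%N ->
    unorm (uadd (tpi mul (u m)) (uopp p)) < eps.

Definition ptad (A : normedModType C) (mul : A -> A -> A) (xi eta : ptens A) (a : A) : ptens A :=
  fun m => tsub (tleft mul a (xi m)) (tright mul (eta m) a).

Definition basc_admissible (A : normedModType C) (mul : A -> A -> A) (K : R) : Prop :=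
  exists (I : Type) (le : I -> I -> Prop), directed le /\
  exists xi eta : I -> ptens A,
    [/\ (forall i, ptens_cauchy (xi i) /\ ptens_cauchy (eta i)),
        (forall a (eps : C), 0 < eps -> exists i0, forall i, le i0 i ->
           ptnorm_le (ptad mul (xi i) (eta i) a) eps),
        (forall i a, ptnorm_le (ptad mul (xi i) (eta i) a) (real_complex R K * `|a|)) &
        (forall i, ptpi_eq mul (xi i) (uunit A) /\ ptpi_eq mul (eta i) (uunit A))].

Definition K_BASC (A : normedModType C) (mul : A -> A -> A) : \bar R :=
  ereal_inf [set (K%:E)%E | K in [set K : R | 0 < K /\ basc_admissible mul K]].

(* Closed two-sided ideals, and "f is the quotient map A -> A/I"       *)
(* (up to isometric identification of B with A/I).                    *)
Definition closed_ideal (A : normedModType C) (mul : A -> A -> A) (I : set A) : Prop :=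
  [/\ I 0, (forall x y, I x -> I y -> I (x + y)), (forall (k : C) x, I x -> I (k *: x)),
      (forall a x, I x -> I (mul a x) /\ I (mul x a)) & closed I].

Definition is_quotient_map (A B : normedModType C) (I : set A) (f : A -> B) : Prop :=
  (forall a, f a = 0 <-> I a) /\
  (* ||f a|| = inf_{x in I} ||a + x||  (the quotient norm) *)
  forall a, (forall x, I x -> `|f a| <= `|a + x|) /\
    (forall eps : C, 0 < eps -> exists x, I x /\ `|a + x| < `|f a| + eps).

End BanachAlgebraDefs.

(* Main.v *)
Require Import Defs.
From mathcomp Require Import all_boot all_order all_algebra.
From mathcomp Require Import complex.
From mathcomp Require Import all_classical all_reals all_analysis.
From mathcomp Require Import ring lra.
Import numFieldNormedType.Exports.
Import GRing.Theory Num.Theory Order.TTheory.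
Set Implicit Arguments.
Unset Strict Implicit.
Unset Printing Implicit Defensive.
Local Open Scope classical_set_scope.
Local Open Scope complex_scope.
Local Open Scope ring_scope.

Set Implicit Arguments.
Unset Strict Implicit.
Unset Printing Implicit Defensive.
Local Open Scope classical_set_scope.
Local Open Scope complex_scope.
Local Open Scope ring_scope.

Section H.
Variable R : realType.
Local Notation C := R[i].

Lemma real_of_ge0 (z : C) : 0 <= z -> z = (complex.Re z)%:C.
Proof. case: z => a b; rewrite lecE /= => /andP[/eqP -> _]. by []. Qed.

Lemma normcR (r : R) : `|r%:C| = `|r|%:C.
Proof. by rewrite normc_def /= expr0n /= addr0 sqrtr_sqr. Qed.

Section N.
Variable X : normedModType C.
Definition nr (x : X) : R := complex.Re `|x|.
Lemma nrE x : `|x| = (nr x)%:C.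
Proof. by apply: real_of_ge0. Qed.
Lemma nr_ge0 x : 0 <= nr x.
Proof. by rewrite -ler0c -nrE. Qed.
Lemma nrD x y : nr (x + y) <= nr x + nr y.
Proof. have := ler_normD x y; rewrite !nrE -raddfD lecR; done. Qed.
Lemma nrN x : nr (- x) = nr x.
Proof. by rewrite /nr normrN. Qed.
Lemma nr0 : nr 0 = 0.
Proof. by rewrite /nr normr0. Qed.
Lemma nr_eq0 x : nr x = 0 -> x = 0.
Proof. by move=> h; apply/normr0_eq0; rewrite nrE h. Qed.
Lemma nrZ (k : C) x : nr (k *: x) = complex.Re `|k| * nr x.
Proof. by rewrite /nr normrZ [`|k|]real_of_ge0 // [`|x|]nrE -rmorphM. Qed.
Lemma nrZR (r : R) x : nr (r%:C *: x) = `|r| * nr x.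
Proof. by rewrite nrZ normcR. Qed.
End N.

Lemma ReR (r : R) : complex.Re (r%:C) = r. Proof. by []. Qed.

Lemma pos_real (e : C) : 0 < e -> e = (complex.Re e)%:C /\ 0 < complex.Re e.
Proof. move=> e0; have h := @real_of_ge0 e (ltW e0); split => //.
by rewrite -ltcR -h. Qed.

Section Lin.
Variables (U V : normedModType C) (f : U -> V) (hf : lin f).
Lemma linD u v : f (u + v) = f u + f v. Proof. exact: hf.1. Qed.
Lemma linZ k u : f (k *: u) = k *: f u. Proof. exact: hf.2. Qed.
Lemma lin0 : f 0 = 0.
Proof. have := linD 0 0; rewrite addr0 => /(congr1 (fun z => z - f 0)). by rewrite subrr addrK. Qed.
Lemma linN u : f (- u) = - f u.
Proof. by apply/eqP; rewrite -addr_eq0 -linD addNr lin0. Qed.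
Lemma linB u v : f (u - v) = f u - f v.
Proof. by rewrite linD linN. Qed.

Lemma lin_bound : continuous f -> exists L : R, 0 < L /\ forall a, nr (f a) <= L * nr a.
Proof.
move=> cf; have /cvgr_dist_lt/(_ 1 ltr01)/nbhs_normP[e /= e0 H] := cf 0.
rewrite lin0 in H.
have [ee er0] := pos_real e0; set er := complex.Re e in ee er0.
exists (2 / er); split; first by rewrite divr_gt0.
move=> a; have [->|an0] := eqVneq a 0; first by rewrite lin0 !nr0 mulr0 lexx.
have na0 : 0 < nr a by rewrite lt_def nr_ge0 andbT; apply/eqP => /nr_eq0/eqP; rewrite (negbTE an0).
set t := er / (2 * nr a).
have t0 : 0 < t by rewrite divr_gt0 // mulr_gt0.
have := H (t%:C *: a).
move=> h.
have h1 : `|t%:C *: a| < e.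
  rewrite nrE nrZR ger0_norm ?ltW // ee ltcR /t invfM mulrA mulfVK ?gt_eqF //; lra.
have h2 : t * nr (f a) < 1.
  have h1' : ball_ Num.norm 0 e (t%:C *: a) by rewrite /= sub0r normrN.
  have := h h1'; rewrite sub0r normrN linZ nrE nrZR ger0_norm ?ltW // => h3.
  have h4 : ((t * nr (f a))%:C < 1%:C) by exact h3.
  by rewrite ltcR in h4.
rewrite -(ler_pM2l t0); apply: ltW; apply: (lt_le_trans h2).
have -> : t * (2 / er * nr a) = 1 by rewrite /t; field; rewrite ?gt_eqF //; lra.
by [].
Qed.

End Lin.
End H.



Section G.
Variable R : realType.
Local Notation C := R[i].

Lemma pow2_big (k : R) : exists m : nat, k < 2 ^+ m.
Proof.
exists (Num.truncn k); apply: (lt_le_trans (archimedean.Num.Theory.truncnS_gt k)).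
by rewrite -natrX ler_nat ltn_expl.
Qed.

Lemma geom_cvg (X : completeNormedModType C) (x : nat -> X) (r : nat -> R) :
  (forall j, nr (x j.+1 - x j) <= r j) -> (forall j, r j.+1 <= r j / 2) ->
  exists xs : X, forall m, nr (xs - x m) <= 2 * r m.
Proof.
move=> hx hr.
have r0 j : 0 <= r j by apply: le_trans (hx j); exact: nr_ge0.
have p0 n : 0 < (2 : R) ^+ n by rewrite exprn_gt0.
have tel m k : nr (x (m + k)%N - x m) <= 2 * r m - 2 * r (m + k)%N.
  elim: k => [|k IH]; first by rewrite addn0 subrr nr0 subrr.
  rewrite addnS.
  have := nrD (x (m + k).+1 - x (m + k)%N) (x (m + k)%N - x m).
  rewrite addrA subrK => h; apply: (le_trans h).
  have := hx (m + k)%N; have := hr (m + k)%N; lra.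
have tel' m n : (m <= n)%N -> nr (x n - x m) <= 2 * r m.
  move=> mn; rewrite -(subnKC mn); apply: (le_trans (tel m (n - m)%N)).
  have := r0 (m + (n - m))%N; lra.
have rdec m : r m <= r 0%N / 2 ^+ m.
  elim: m => [|m IH]; first by rewrite expr0 divr1.
  have e : r 0%N / 2 ^+ m.+1 = (r 0%N / 2 ^+ m) / 2 by rewrite exprSr invfM mulrA.
  rewrite e; have := hr m; lra.
have cx : cvg (x @ \oo).
  apply: cauchy_cvg; apply: cauchy_exP => eps eps0.
  have [ee er0] := pos_real eps0.
  have [m hm] := pow2_big (2 * r 0%N / complex.Re eps).
  exists (x m); apply: filterS (nbhs_infty_ge m) => n /= mn.
  rewrite -ball_normE /= distrC nrE ee ltcR.
  apply: (le_lt_trans (tel' _ _ mn)).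
  have h2 : 2 * r 0%N / 2 ^+ m < complex.Re eps.
    by rewrite ltr_pdivrMr // in hm; rewrite ltr_pdivrMr // [_ * 2 ^+ m]mulrC.
  have := rdec m; have e : 2 * r 0%N / 2 ^+ m = 2 * (r 0%N / 2 ^+ m) by rewrite mulrA.
  lra.
have /cvg_ex [xs Hxs] := cx.
exists xs => m; rewrite leNgt; apply/negP => h.
set d := nr (xs - x m) - 2 * r m.
have d0 : 0 < d by rewrite /d subr_gt0.
have d0' : 0 < d%:C by rewrite ltcR.
move/cvgr_dist_lt: Hxs => /(_ _ d0') HN.
near \oo => n.
have h1 : `|xs - x n| < d%:C by near: n; exact: HN.
have h2 : (m <= n)%N by near: n; exact: nbhs_infty_ge.
rewrite nrE ltcR in h1.
have := tel' _ _ h2; have := nrD (xs - x n) (x n - x m).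
rewrite addrA subrK.
have hd : d = nr (xs - x m) - 2 * r m by [].
clearbody d; lra.
Unshelve. all: end_near.
Qed.
End G.


Section OM.
Variable R : realType.
Local Notation C := R[i].
Variables (A B : completeNormedModType C) (f : A -> B).
Hypotheses (hf : lin f) (cf : continuous f) (sf : forall b, exists a, f a = b).

Lemma om_step1 : exists (n : nat) (y0 : B) (rho : R), 0 < rho /\
  forall y, nr (y - y0) < rho -> forall eps : R, 0 < eps ->
    exists a, nr a <= n%:R /\ nr (f a - y) < eps.
Proof.
apply: contrapT => H.
have step : forall (n : nat) (y0 : B) (rho : R), 0 < rho -> exists y (e : R),
    [/\ nr (y - y0) < rho, 0 < e & forall a, nr a <= n%:R -> e <= nr (f a - y)].
  move=> n y0 rho rho0; apply: contrapT => K; apply: H; exists n, y0, rho; split=> // y hy e e0.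
  apply: contrapT => K2; apply: K; exists y, e; split => // a ha.
  rewrite leNgt; apply/negP => K3; apply: K2; exists a; split => //.
have G : forall p : nat * (B * R), exists q : B * R, 0 < p.2.2 ->
    [/\ 0 < q.2, q.2 <= p.2.2 / 2, nr (q.1 - p.2.1) <= p.2.2 &
        forall z, nr (z - q.1) <= 2 * q.2 -> forall a, nr a <= p.1%:R -> f a != z].
  move=> [k [y rho]] /=.
  have [rho0|rho0] := boolP (0 < rho); last by exists (0, 0) => h; exfalso; move/negP: rho0; apply.
  have [y' [e [h1 h2 h3]]] := step k y rho rho0.
  exists (y', Num.min (rho / 2) (e / 4)) => _ /=; split.
  - by rewrite lt_min divr_gt0 // divr_gt0.
  - by rewrite ge_min lexx.
  - exact: ltW.
  - move=> z hz a ha; apply/eqP => faz.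
    have := h3 a ha; rewrite faz.
    have : Num.min (rho / 2) (e / 4) <= e / 4 by rewrite ge_min lexx orbT.
    move: hz; lra.
have [g Hg] := choice G.
pose fix s k := if k is k'.+1 then g (k', s k') else ((0 : B), (1 : R)).
have spos k : 0 < (s k).2.
  elim: k => [|k IH] /=; first exact: ltr01.
  by have [] := Hg (k, s k) IH.
have [ys Hys] : exists xs : B, forall m, nr (xs - (s m).1) <= 2 * (s m).2.
  apply: (geom_cvg (x := fun k => (s k).1) (r := fun k => (s k).2)).
  - by move=> j /=; have [] := Hg (j, s j) (spos j).
  - by move=> j /=; have [] := Hg (j, s j) (spos j).
have [a fa] := sf ys.
have [k hk] : exists k : nat, nr a <= k%:R.
  exists (Num.truncn (nr a)).+1; apply: ltW; exact: archimedean.Num.Theory.truncnS_gt.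
have [_ _ _ H4] := Hg (k, s k) (spos k).
by have := H4 ys (Hys k.+1) a hk; rewrite fa eqxx.
Qed.

Lemma nr_pos (X : normedModType C) (x : X) : x != 0 -> 0 < nr x.
Proof.
move=> xn0; rewrite lt_def nr_ge0 andbT; apply/eqP => /nr_eq0/eqP.
by rewrite (negbTE xn0).
Qed.

Lemma nrB_le (X : normedModType C) (x y : X) : nr (x - y) <= nr x + nr y.
Proof. by have := nrD x (- y); rewrite nrN. Qed.

Lemma om_step2 : exists c : R, 0 < c /\ forall y (eps : R), 0 < eps ->
  exists a, nr a <= c * nr y /\ nr (f a - y) < eps.
Proof.
have [n [y0 [rho [rho0 H]]]] := om_step1.
exists (4 * n.+1%:R / rho); split; first by rewrite divr_gt0 // mulr_gt0 // ltr0Sn.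
move=> y eps eps0.
have [->|yn0] := eqVneq y 0.
  by exists 0; rewrite (lin0 hf) subr0 !nr0 mulr0 lexx.
have ny0 := nr_pos yn0.
set t := rho / (2 * nr y).
have t0 : 0 < t by rewrite divr_gt0 // mulr_gt0.
set y' := t%:C *: y.
have ny' : nr y' = rho / 2.
  by rewrite nrZR ger0_norm ?ltW // /t; field; rewrite gt_eqF.
have te0 : 0 < t * eps / 2 by rewrite divr_gt0 // mulr_gt0.
have h1 : nr ((y0 + y') - y0) < rho by rewrite addrAC subrr add0r ny'; lra.
have [a1 [ha1 fa1]] := H _ h1 _ te0.
have h2 : nr (y0 - y0) < rho by rewrite subrr nr0.
have [a2 [ha2 fa2]] := H _ h2 _ te0.
exists ((t^-1)%:C *: (a1 - a2)); split.
  have hd : nr (a1 - a2) <= 2 * n%:R by have := nrB_le a1 a2; lra.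
  have ti0 : 0 <= t^-1 by rewrite invr_ge0 ltW.
  rewrite nrZR (ger0_norm ti0).
  apply: (le_trans (ler_wpM2l ti0 hd)).
  have -> : t^-1 * (2 * n%:R) = 4 * n%:R / rho * nr y.
    by rewrite /t; field; rewrite ?gt_eqF.
  rewrite ler_wpM2r ?nr_ge0 // ler_wpM2r ?invr_ge0 ?(ltW rho0) //.
  rewrite -natr1; lra.
have ti0 : 0 < t^-1 by rewrite invr_gt0.
rewrite (linZ hf) (linB hf).
have ey : y = (t^-1)%:C *: y'.
  by rewrite /y' scalerA -rmorphM mulVf ?gt_eqF // rmorph1 scale1r.
rewrite {1}ey -scalerBr nrZR (ger0_norm (ltW ti0)).
have -> : f a1 - f a2 - y' = (f a1 - (y0 + y')) - (f a2 - y0).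
  by rewrite opprD opprB !addrA (addrAC _ (- y')) subrK addrAC.
have hlt : nr (f a1 - (y0 + y') - (f a2 - y0)) < t * eps.
  have := nrB_le (f a1 - (y0 + y')) (f a2 - y0); lra.
rewrite -(ltr_pM2l t0) mulrA mulfV ?gt_eqF // mul1r.
exact: hlt.
Qed.

Lemma open_mapping : exists c : R, 0 < c /\ forall b, exists a, f a = b /\ nr a <= c * nr b.
Proof.
have [c [c0 W]] := om_step2.
have [L [L0 HL]] := lin_bound hf cf.
exists (2 * c); split; first by rewrite mulr_gt0.
move=> Y.
have [->|Yn0] := eqVneq Y 0.
  by exists 0; rewrite (lin0 hf) !nr0 mulr0.
have eta0 := nr_pos Yn0; set eta := nr Y in eta0 *.
have p0 n : 0 < (2 : R) ^+ n by rewrite exprn_gt0.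
have G : forall p : nat * B, exists a, nr a <= c * nr p.2 /\ nr (f a - p.2) < eta / 2 ^+ p.1.+1.
  by move=> [k z]; apply: W; rewrite divr_gt0.
have [g Hg] := choice G.
pose fix z k := if k is k'.+1 then z k' - f (g (k', z k')) else Y.
pose a k := g (k, z k).
pose fix S k := if k is k'.+1 then S k' + a k' else 0.
have zb k : nr (z k) <= eta / 2 ^+ k.
  case: k => [|k] /=; first by rewrite expr0 divr1.
  by have [_ h] := Hg (k, z k); rewrite -nrN opprB; exact: ltW h.
have ab k : nr (a k) <= c * eta / 2 ^+ k.
  have [h _] := Hg (k, z k); apply: (le_trans h); rewrite -mulrA ler_wpM2l ?(ltW c0) //.
  exact: zb.
have fS k : f (S k) = Y - z k.
  elim: k => [|k IH] /=; first by rewrite (lin0 hf) subrr.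
  by rewrite (linD hf) IH opprB addrA addrAC.
have [Ss HSs] : exists xs : A, forall m, nr (xs - S m) <= 2 * (c * eta / 2 ^+ m).
  apply: (geom_cvg (x := S) (r := fun m => c * eta / 2 ^+ m)).
  - by move=> j /=; rewrite addrAC subrr add0r; exact: ab.
  - move=> j; have -> : c * eta / 2 ^+ j.+1 = c * eta / 2 ^+ j / 2.
      by rewrite exprSr invfM mulrA.
    exact: lexx.
exists Ss; split; last first.
  have := HSs 0%N; rewrite /= subr0 expr0 divr1 mulrA; exact.
apply/eqP; rewrite -subr_eq0; apply/eqP/nr_eq0.
apply/eqP; rewrite eq_le nr_ge0 andbT leNgt; apply/negP => hd.
set d := nr (f Ss - Y) in hd *.
have [m hm] := pow2_big ((2 * L * c + 1) * eta / d).
have e1 : f Ss - Y = f (Ss - S m) - z m.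
  by rewrite (linB hf) fS opprB addrA addrAC addrK.
have h1 : d <= L * (2 * (c * eta / 2 ^+ m)) + eta / 2 ^+ m.
  rewrite /d e1; apply: le_trans (nrB_le _ _) _; apply: lerD; last exact: zb.
  apply: le_trans (HL (Ss - S m)) _; apply: ler_wpM2l; [exact: ltW | exact: HSs].
have h2 : (2 * L * c + 1) * eta / 2 ^+ m < d.
  by rewrite ltr_pdivrMr // in hm; rewrite ltr_pdivrMr // [d * _]mulrC.
have e2 : L * (2 * (c * eta / 2 ^+ m)) + eta / 2 ^+ m = (2 * L * c + 1) * eta / 2 ^+ m.
  by field; rewrite gt_eqF.
lra.
Qed.
End OM.

Section P.
Variable R : realType.
Local Notation C := R[i].

Lemma bound_norm (x M t : C) : 0 <= x -> x <= M * t -> 0 <= t -> x <= `|M| * t.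
Proof.
move=> x0 h t0; apply: (le_trans h); have Mt0 : 0 <= M * t := le_trans x0 h.
by rewrite -{1}(ger0_norm Mt0) normrM (ger0_norm t0).
Qed.

Lemma nr_boundC (U V : normedModType C) (g : U -> V) (L : R) :
  (forall a, nr (g a) <= L * nr a) -> forall a, `|g a| <= L%:C * `|a|.
Proof. by move=> h a; rewrite !nrE -rmorphM lecR. Qed.

Variables (A B : normedModType C) (mulA : A -> A -> A) (mulB : B -> B -> B) (Theta : A -> B).
Hypothesis hTh : alg_hom mulA mulB Theta.

Lemma bimodule_pull (Y : completeNormedModType C) l r L :
  (forall a, nr (Theta a) <= L * nr a) ->
  bimodule mulB l r -> bimodule mulA (fun a (y : Y) => l (Theta a) y) (fun y a => r y (Theta a)).
Proof.
move=> HL; case: hTh => hl hm.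
case=> lDl lZl lDr lZr rDl rZl rDr rZr lA rA lr [M1 H1] [M2 H2]; split.
- by move=> a b y; rewrite (linD hl) lDl.
- by move=> k a y; rewrite (linZ hl) lZl.
- by move=> a y z; rewrite lDr.
- by move=> k a y; rewrite lZr.
- by move=> y z a; rewrite rDl.
- by move=> k y a; rewrite rZl.
- by move=> y a b; rewrite (linD hl) rDr.
- by move=> k y a; rewrite (linZ hl) rZr.
- by move=> a b y; rewrite hm lA.
- by move=> y a b; rewrite hm rA.
- by move=> a y b; rewrite lr.
- exists (`|M1| * L%:C) => a y.
  have h : `|l (Theta a) y| <= `|M1| * (`|Theta a| * `|y|).
    by apply: bound_norm; rewrite ?mulrA ?H1 // mulr_ge0.
  apply: (le_trans h); rewrite -!mulrA ler_wpM2l // mulrA ler_wpM2r //.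
  exact: nr_boundC.
- exists (`|M2| * L%:C) => a y.
  have h : `|r y (Theta a)| <= `|M2| * (`|Theta a| * `|y|).
    by apply: bound_norm; rewrite ?mulrA ?H2 // mulr_ge0.
  apply: (le_trans h); rewrite -!mulrA ler_wpM2l // mulrA ler_wpM2r //.
  exact: nr_boundC.
Qed.

Lemma derivation_pull (Y : normedModType C) l r (D : B -> Y) :
  derivation mulB l r D ->
  derivation mulA (fun a (y : Y) => l (Theta a) y) (fun y a => r y (Theta a)) (fun a => D (Theta a)).
Proof.
case: hTh => hl hm [hD1 hD2]; split; first split.
- by move=> u v; rewrite (linD hl) (linD hD1).
- by move=> k u; rewrite (linZ hl) (linZ hD1).
- by move=> a b; rewrite hm hD2.
Qed.
End P.

Section M.
Variable R : realType.
Local Notation C := R[i].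
Variables (A B : completeNormedModType C) (mulA : A -> A -> A) (mulB : B -> B -> B) (Theta : A -> B).
Hypotheses (hTh : alg_hom mulA mulB Theta) (cTh : continuous Theta)
  (sTh : forall b : B, exists a : A, Theta a = b).

Lemma comp_cont (Y : normedModType C) (D : B -> Y) : continuous D -> continuous (fun a => D (Theta a)).
Proof. by move=> cD x; apply: continuous_comp; [exact: cTh | exact: cD]. Qed.

Lemma part1 : approx_semi_contractible mulA -> approx_semi_contractible mulB.
Proof.
move=> H Y l r bm D hD cD.
have [L [L0 HL]] := lin_bound hTh.1 cTh.
have [I [le [dir [xi [eta conv]]]]] :=
  H Y _ _ (bimodule_pull hTh HL bm) _ (derivation_pull hTh hD) (comp_cont cD).
exists I, le; split => //; exists xi, eta => b; have [a <-] := sTh b; exact: conv a.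
Qed.

Lemma part2 : bdd_approx_semi_contractible mulA -> bdd_approx_semi_contractible mulB.
Proof.
move=> H Y l r bm D hD cD.
have [L [L0 HL]] := lin_bound hTh.1 cTh.
have [c [c0 Hc]] := open_mapping hTh.1 cTh sTh.
have [I [le [dir [xi [eta [conv [M HM]]]]]]] :=
  H Y _ _ (bimodule_pull hTh HL bm) _ (derivation_pull hTh hD) (comp_cont cD).
exists I, le; split => //; exists xi, eta; split.
  by move=> b; have [a <-] := sTh b; exact: conv a.
exists (`|M| * c%:C) => i b; have [a [<- ha]] := Hc b.
have h := HM i a.
apply: (le_trans (bound_norm (normr_ge0 _) h (normr_ge0 _))).
rewrite -mulrA ler_wpM2l //; rewrite !nrE -rmorphM lecR; exact: ha.
Qed.

Lemma part3 : bdd_approx_semi_amenable mulA -> bdd_approx_semi_amenable mulB.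
Proof.
move=> H X l r bm D [hD1 hD2 hD3 hD4 [M HM]].
have [L [L0 HL]] := lin_bound hTh.1 cTh.
have [c [c0 Hc]] := open_mapping hTh.1 cTh sTh.
case: (hTh) => hl hm.
have DA : dual_cont_derivation mulA (fun a (y : X) => l (Theta a) y) (fun y a => r y (Theta a))
    (fun a => D (Theta a)).
  split.
  - by move=> a; exact: hD1.
  - by move=> a b; rewrite (linD hl) hD2.
  - by move=> k a; rewrite (linZ hl) hD3.
  - by move=> a b; rewrite hm hD4.
  - exists (`|M| * L%:C) => a x.
    have h : `|D (Theta a) x| <= `|M| * (`|Theta a| * `|x|).
      by apply: bound_norm; rewrite ?mulrA ?HM // mulr_ge0.
    apply: (le_trans h); rewrite -!mulrA ler_wpM2l // mulrA ler_wpM2r //.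
    exact: nr_boundC.
have [I [le [dir [xi [eta [hxe [conv [M' HM']]]]]]]] := H X _ _ (bimodule_pull hTh HL bm) _ DA.
exists I, le; split => //; exists xi, eta; split => //; split.
  by move=> b eps eps0; have [a <-] := sTh b; exact: conv a eps eps0.
exists (`|M'| * c%:C) => i b x; have [a [<- ha]] := Hc b.
have h := HM' i a x.
have h2 : `|dual_ad l r (xi i) (eta i) (Theta a) x| <= `|M'| * (`|a| * `|x|).
  by apply: bound_norm; rewrite ?mulrA // mulr_ge0.
apply: (le_trans h2); rewrite -!mulrA ler_wpM2l // mulrA ler_wpM2r //.
rewrite !nrE -rmorphM lecR; exact: ha.
Qed.
End M.

Section K.
Variable R : realType.
Local Notation C := R[i].
Variables (A B : normedModType C) (mulA : A -> A -> A) (mulB : B -> B -> B) (Theta : A -> B).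
Hypotheses (hl : lin Theta) (hm : forall a b, Theta (mulA a b) = mulB (Theta a) (Theta b))
  (contr : forall a, `|Theta a| <= `|a|).

Definition uT (p : unitz A) : unitz B := (p.1, Theta p.2).
Definition tmap (t : tens A) : tens B := map (fun x => (uT x.1, uT x.2)) t.

Lemma uT_add p q : uT (uadd p q) = uadd (uT p) (uT q).
Proof. by rewrite /uT /uadd /= (linD hl). Qed.
Lemma uT_scale k p : uT (uscale k p) = uscale k (uT p).
Proof. by rewrite /uT /uscale /= (linZ hl). Qed.
Lemma uT_opp p : uT (uopp p) = uopp (uT p).
Proof. by rewrite /uT /uopp /= (linN hl). Qed.
Lemma uT_zero : uT (uzero A) = uzero B.
Proof. by rewrite /uT /uzero /= (lin0 hl). Qed.
Lemma uT_unit : uT (uunit A) = uunit B.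
Proof. by rewrite /uT /uunit /= (lin0 hl). Qed.
Lemma uT_mul p q : uT (umul mulA p q) = umul mulB (uT p) (uT q).
Proof. by rewrite /uT /umul /= !(linD hl) !(linZ hl) hm. Qed.
Lemma uT_inj a : uT (uinj a) = uinj (Theta a).
Proof. by []. Qed.
Lemma unorm_ge0 (X : normedModType C) (p : unitz X) : 0 <= unorm p.
Proof. by rewrite /unorm addr_ge0. Qed.
Lemma unorm_uT p : unorm (uT p) <= unorm p.
Proof. by rewrite /unorm /uT /= lerD2l contr. Qed.

Lemma tequiv_map t s : tequiv t s -> tequiv (tmap t) (tmap s).
Proof.
move=> h beta [b1 b2 b3 b4].
have := h (fun p q => beta (uT p) (uT q)) _.
rewrite /teval /tmap !big_map; apply; split.
- by move=> p q x; rewrite uT_add b1.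
- by move=> k p x; rewrite uT_scale b2.
- by move=> p q x; rewrite uT_add b3.
- by move=> k p x; rewrite uT_scale b4.
Qed.

Lemma tcost_map t : tcost (tmap t) <= tcost t.
Proof.
rewrite /tcost /tmap big_map; apply: ler_sum => x _ /=.
by apply: ler_pM; rewrite ?unorm_ge0 ?unorm_uT.
Qed.

Lemma pnorm_le_map t c : pnorm_le t c -> pnorm_le (tmap t) c.
Proof.
move=> h eps eps0; have [s [hs hc]] := h eps eps0.
exists (tmap s); split; first exact: tequiv_map.
exact: le_lt_trans (tcost_map s) hc.
Qed.

Lemma tmap_sub t s : tmap (tsub t s) = tsub (tmap t) (tmap s).
Proof.
rewrite /tmap /tsub map_cat -!map_comp; congr (_ ++ _).
by apply: eq_map => x /=; rewrite uT_opp.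
Qed.

Lemma tmap_left a t : tmap (tleft mulA a t) = tleft mulB (Theta a) (tmap t).
Proof. rewrite /tmap /tleft -!map_comp; apply: eq_map => x /=; by rewrite uT_mul. Qed.

Lemma tmap_right a t : tmap (tright mulA t a) = tright mulB (tmap t) (Theta a).
Proof. rewrite /tmap /tright -!map_comp; apply: eq_map => x /=; by rewrite uT_mul. Qed.

Lemma tpi_map t : tpi mulB (tmap t) = uT (tpi mulA t).
Proof.
elim: t => [|x t IH] /=; first by rewrite uT_zero.
by rewrite IH uT_add uT_mul.
Qed.

Lemma ptad_map (u v : ptens A) a :
  ptad mulB (fun m => tmap (u m)) (fun m => tmap (v m)) (Theta a) =
  fun m => tmap (ptad mulA u v a m).
Proof. by apply: funext => m; rewrite /ptad tmap_sub tmap_left tmap_right. Qed.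

Lemma ptnorm_le_map (u : ptens A) c : ptnorm_le u c -> ptnorm_le (fun m => tmap (u m)) c.
Proof.
move=> h eps eps0; have [N HN] := h eps eps0; exists N => m hm'.
exact: pnorm_le_map (HN m hm').
Qed.

Lemma cauchy_map (u : ptens A) : ptens_cauchy u -> ptens_cauchy (fun m => tmap (u m)).
Proof.
move=> h eps eps0; have [N HN] := h eps eps0; exists N => m n hm' hn.
by rewrite -tmap_sub; exact: pnorm_le_map (HN m n hm' hn).
Qed.

Lemma ptpi_map (u : ptens A) : ptpi_eq mulA u (uunit A) ->
  ptpi_eq mulB (fun m => tmap (u m)) (uunit B).
Proof.
move=> h eps eps0; have [N HN] := h eps eps0; exists N => m hm'.
rewrite tpi_map -uT_unit -uT_opp -uT_add.
exact: le_lt_trans (unorm_uT _) (HN m hm').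
Qed.

Lemma pnorm_le_mono (t : tens A) (c c' : C) : pnorm_le t c -> c <= c' -> pnorm_le t c'.
Proof.
move=> h cc eps eps0; have [s [hs hc]] := h eps eps0; exists s; split => //.
by apply: lt_le_trans hc _; rewrite lerD2r.
Qed.
End K.

Section Q.
Variable R : realType.
Local Notation C := R[i].
Variables (A B : normedModType C) (mulA : A -> A -> A) (mulB : B -> B -> B) (Theta : A -> B).
Hypotheses (hTh : alg_hom mulA mulB Theta) (sTh : forall b : B, exists a : A, Theta a = b).
Variables (I : set A) (hI : closed_ideal mulA I) (hq : is_quotient_map I Theta).

Lemma adm_transfer K : 0 < K -> basc_admissible mulA K -> basc_admissible mulB K.
Proof.
case: hTh => hl hm.
have I0 : I 0 by case: hI.
have contr : forall a, `|Theta a| <= `|a|.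
  by move=> a; have := (hq.2 a).1 0 I0; rewrite addr0.
move=> K0 [J [le [dir [xi [eta [hc hconv hbd hpi]]]]]].
exists J, le; split => //.
exists (fun i m => tmap Theta (xi i m)), (fun i m => tmap Theta (eta i m)); split.
- by move=> i; have [h1 h2] := hc i; split; apply: cauchy_map.
- move=> b eps eps0; have [a <-] := sTh b; have [i0 Hi0] := hconv a eps eps0.
  exists i0 => i hi; rewrite (ptad_map hl hm); exact: ptnorm_le_map (Hi0 i hi).
- move=> i b eps eps0.
  have [ee er0] := pos_real eps0; set e := complex.Re eps in ee er0.
  have [a0 <-] := sTh b.
  have e'0 : 0 < (e / (2 * K))%:C by rewrite ltcR divr_gt0 // mulr_gt0.
  have [x [Ix hx]] := (hq.2 a0).2 _ e'0.
  have Tx : Theta x = 0 by apply/(hq.1 x).2.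
  have Ta : Theta (a0 + x) = Theta a0 by rewrite (linD hl) Tx addr0.
  have H1 : ptnorm_le (ptad mulB (fun m => tmap Theta (xi i m)) (fun m => tmap Theta (eta i m))
      (Theta (a0 + x))) (K%:C * `|a0 + x|).
    by rewrite (ptad_map hl hm); exact: ptnorm_le_map (hbd i (a0 + x)).
  rewrite Ta in H1.
  have e2 : 0 < (e / 2)%:C by rewrite ltcR divr_gt0.
  have [N HN] := H1 _ e2; exists N => m hm'.
  apply: pnorm_le_mono (HN m hm') _.
  rewrite ee !nrE -!rmorphM -!rmorphD lecR.
  rewrite !nrE -rmorphD ltcR in hx.
  have h3 := ler_wpM2l (ltW K0) (ltW hx).
  have e3 : K * (nr (Theta a0) + e / (2 * K)) = K * nr (Theta a0) + e / 2.
    by field; rewrite gt_eqF.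
  lra.
- by move=> i; have [h1 h2] := hpi i; split; apply: ptpi_map.
Qed.

Lemma KBASC_le : (K_BASC mulB <= K_BASC mulA)%E.
Proof.
apply: ereal_inf_le_tmp => x [K [K0 adm] <-]; exists K => //; split => //.
exact: adm_transfer.
Qed.
End Q.

Theorem proposition3p11 (R : realType) (A B : completeNormedModType R[i])
  (mulA : A -> A -> A) (mulB : B -> B -> B)
  (hA : banach_algebra mulA) (hB : banach_algebra mulB)
  (Theta : A -> B) (hTh : alg_hom mulA mulB Theta) (cTh : continuous Theta)
  (sTh : forall b : B, exists a : A, Theta a = b) :
  (approx_semi_contractible mulA -> approx_semi_contractible mulB) /\
  (bdd_approx_semi_contractible mulA ->
     bdd_approx_semi_contractible mulB /\
     (forall I : set A, closed_ideal mulA I -> is_quotient_map I Theta ->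
        (K_BASC mulB <= K_BASC mulA)%E)) /\
  (bdd_approx_semi_amenable mulA -> bdd_approx_semi_amenable mulB).
Proof.
split; first exact: (part1 hTh cTh sTh).
split; last exact: (part3 hTh cTh sTh).
move=> H; split; first exact: (part2 hTh cTh sTh H).
by move=> I hI hq; exact: (KBASC_le hTh sTh hI hq).
Qed.
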